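(* Let $f=\sum_{i=0}^{d-1}c_it^i+t^d\in\mathcal{L}[t]$ be monic of degree $d\ge1$ with $c_0\ne0$, whose Newton polygon consists of exactly one edge, of slope $s$, and put $r=ds\in\mathbb{Z}$. Let $M$ be a left $\mathcal{L}[t]$-module isomorphic to $\mathcal{L}[t]/\mathcal{L}[t]f$. (1) There is an $\mathcal{O}$-lattice $\Lambda$ in $M$ with $\sigma^rt^d\Lambda=\Lambda$. If $s>0$, $\Lambda$ can moreover be chosen with $t^{-1}\Lambda\subseteq\Lambda$. (2) If $u,v\in\mathbb{Z}$, $u\ne0$, and $\Lambda'$ is an $\mathcal{O}$-lattice in $M$ with $\sigma^vt^u\Lambda'=\Lambda'$, then $v/u=s$.
   Context: $(\mathcal{L},v)$ is a complete discretely valued skew field (division ring with a discrete valuation $v:\mathcal{L}\to\mathbb{Z}\cup\{\infty\}$, complete), with valuation ring $\mathcal{O}=\{v\ge0\}$ and a fixed uniformizer $\sigma$ ($v(\sigma)=1$). $\mathcal{L}[t]$ is the polynomial ring in a central indeterminate $t$; $t$ acts invertibly on $M$ here since $c_0\neq 0$. The Newton polygon of $f=\sum a_it^i$ is the lower convex hull of the points $(i,v(a_i))$ with $a_i\ne0$. An $\mathcal{O}$-lattice in a finite-dimensional left $\mathcal{L}$-vector space $M$ is a finitely generated $\mathcal{O}$-submodule containing an $\mathcal{L}$-basis of $M$. *)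

(* Defs.v *)
From HB Require Import structures.
From mathcomp Require Import all_boot all_order all_algebra.
Set Implicit Arguments. Unset Strict Implicit. Unset Printing Implicit Defensive.
Import Order.TTheory GRing.Theory Num.Theory.
Local Open Scope ring_scope.

(* A valuation v : L -> int; the value v 0 = +oo is encoded by [vge]:
   vge v x n  <=>  v(x) >= n  (always true for x = 0). *)
Definition vge (L : unitRingType) (v : L -> int) (x : L) (n : int) : bool :=
  (x == 0) || (n <= v x).

Definition is_skew_field (L : unitRingType) : Prop :=
  forall x : L, x != 0 -> x \is a GRing.unit.

Definition is_discrete_valuation (L : unitRingType) (v : L -> int) : Prop :=
  (forall x y : L, x != 0 -> y != 0 -> v (x * y) = v x + v y) /\
  (forall (x y : L) (n : int), vge v x n -> vge v y n -> vge v (x + y) n).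

Definition v_cauchy (L : unitRingType) (v : L -> int) (a : nat -> L) : Prop :=
  forall N : int, exists K : nat, forall m n : nat,
    (K <= m)%N -> (K <= n)%N -> vge v (a m - a n) N.
Definition v_converges (L : unitRingType) (v : L -> int) (a : nat -> L) (l : L) :
  Prop :=
  forall N : int, exists K : nat, forall n : nat, (K <= n)%N -> vge v (a n - l) N.
Definition v_complete (L : unitRingType) (v : L -> int) : Prop :=
  forall a : nat -> L, v_cauchy v a -> exists l, v_converges v a l.

(* Action of p in L[t] on M, where t acts through the L-linear map T. *)
Definition poly_act (L : unitRingType) (M : lmodType L) (T : M -> M)
  (p : {poly L}) (m : M) : M :=
  \sum_(i < size p) p`_i *: iter i T m.

(* The left L[t]-module (M, T) is isomorphic to L[t]/L[t]f:
   there is m0 with p |-> p.m0 surjective with kernel the left ideal L[t]f. *)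
Definition iso_cyclic (L : unitRingType) (M : lmodType L) (T : M -> M)
  (f : {poly L}) : Prop :=
  exists m0 : M,
    (forall x : M, exists p : {poly L}, x = poly_act T p m0) /\
    (forall p : {poly L}, poly_act T p m0 = 0 <-> exists q : {poly L}, p = q * f).

(* O-span of finitely many generators, O = {v >= 0}. *)
Definition in_Ospan (L : unitRingType) (v : L -> int) (M : lmodType L)
  (g : seq M) (x : M) : Prop :=
  exists a : 'I_(size g) -> L, (forall i, vge v (a i) 0) /\
    x = \sum_(i < size g) a i *: g`_i.

Definition is_L_basis (L : unitRingType) (M : lmodType L) (n : nat)
  (b : 'I_n -> M) : Prop :=
  (forall a : 'I_n -> L, \sum_(i < n) a i *: b i = 0 -> forall i, a i = 0) /\
  (forall x : M, exists a : 'I_n -> L, x = \sum_(i < n) a i *: b i).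

Definition is_O_lattice (L : unitRingType) (v : L -> int) (M : lmodType L)
  (Lam : M -> Prop) : Prop :=
  (exists g : seq M, forall x, Lam x <-> in_Ospan v g x) /\
  (exists (n : nat) (b : 'I_n -> M), (forall i, Lam (b i)) /\ is_L_basis b).

(* tpow T u x y  <=>  y = t^u x  (u may be negative; T is invertible). *)
Definition tpow (L : unitRingType) (M : lmodType L) (T : M -> M) (u : int)
  (x y : M) : Prop :=
  if (0 <= u) then y = iter `|u|%N T x else iter `|u|%N T y = x.

Definition img_st (L : unitRingType) (M : lmodType L) (T : M -> M) (sigma : L)
  (v u : int) (Lam : M -> Prop) : M -> Prop :=
  fun z => exists x y : M, Lam x /\ tpow T u x y /\ z = sigma ^ v *: y.

Definition set_eq (M : Type) (A B : M -> Prop) : Prop := forall z, A z <-> B z.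
Definition set_sub (M : Type) (A B : M -> Prop) : Prop := forall z, A z -> B z.

(* Main.v *)
Require Import Defs.
From HB Require Import structures.
From mathcomp Require Import all_boot all_order all_algebra.
From mathcomp Require Import zify ring lra.
Import Order.TTheory GRing.Theory Num.Theory.
Local Open Scope ring_scope.

Section Val.
Variables (L : unitRingType) (v : L -> int) (sigma : L).
Hypothesis HL : is_skew_field L.
Hypothesis Hv : is_discrete_valuation v.
Hypothesis Hsigma0 : sigma != 0.
Hypothesis Hsigma : v sigma = 1.

Lemma mul_nz {x y : L} : x != 0 -> y != 0 -> x * y != 0.
Proof.
move=> hx hy; apply/negP => /eqP hxy; move/negP: hy; apply.
by rewrite -(mulKr (HL _ hx) y) hxy mulr0.
Qed.

Lemma v1 : v 1 = 0.
Proof. have := Hv.1 1 1 (oner_neq0 L) (oner_neq0 L); rewrite mulr1; lia. Qed.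

Lemma vinv (x : L) : x != 0 -> v x^-1 = - v x.
Proof.
move=> hx; have hu := HL _ hx.
have hi : x^-1 != 0 by rewrite invr_eq0.
have := Hv.1 x x^-1 hx hi; rewrite mulrV // v1; lia.
Qed.

Lemma vN1 : v (-1) = 0.
Proof.
have h : (-1 : L) != 0 by rewrite oppr_eq0 oner_neq0.
have := Hv.1 _ _ h h; rewrite mulrNN mulr1 v1; lia.
Qed.

Lemma vge0 n : vge v 0 n.
Proof. by rewrite /vge eqxx. Qed.

Lemma vge_mul x y a b : vge v x a -> vge v y b -> vge v (x * y) (a + b).
Proof.
rewrite /vge; case: eqP => [->|/eqP hx] /=; first by rewrite mul0r eqxx.
case: eqP => [->|/eqP hy] /=; first by rewrite mulr0 eqxx.
move=> ha hb; rewrite (negPf (mul_nz hx hy)) /= Hv.1 //; lia.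
Qed.

Lemma vge_le x a b : vge v x a -> b <= a -> vge v x b.
Proof. rewrite /vge; case: (x == 0) => //= h1 h2; lia. Qed.

Lemma vge_opp x a : vge v x a -> vge v (- x) a.
Proof.
move=> h; rewrite -mulN1r -(add0r a); apply: vge_mul => //.
by rewrite /vge vN1 lexx orbT.
Qed.

Lemma vge_add x y a : vge v x a -> vge v y a -> vge v (x + y) a.
Proof. exact: Hv.2. Qed.

Lemma vge_sum (I : Type) (r : seq I) (P : pred I) (F : I -> L) a :
  (forall i, P i -> vge v (F i) a) -> vge v (\sum_(i <- r | P i) F i) a.
Proof. move=> h; apply: (big_ind (fun x => vge v x a)) => //; [exact: vge0 | move=> x y; exact: vge_add]. Qed.

Lemma sig_unit : sigma \is a GRing.unit.
Proof. exact: HL _ Hsigma0. Qed.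

Lemma sign_nz (n : nat) : sigma ^+ n != 0.
Proof. by elim: n => [|n IH]; rewrite ?expr0 ?oner_neq0 // exprS mul_nz. Qed.

Lemma sigz_nz (n : int) : sigma ^ n != 0.
Proof.
case: n => n; first exact: sign_nz.
by rewrite NegzE -exprnN invr_neq0 // sign_nz.
Qed.

Lemma v_sigz (n : int) : v (sigma ^ n) = n.
Proof.
have hp : forall m : nat, v (sigma ^+ m) = m.
  elim=> [|m IH]; first by rewrite expr0 v1.
  rewrite exprS Hv.1 // ?IH ?Hsigma //; last first.
    exact: sign_nz.
case: n => n; first by rewrite hp.
rewrite NegzE -exprnN vinv ?hp ?sign_nz //.
Qed.

Lemma vge_sigz (n : int) : vge v (sigma ^ n) n.
Proof. by rewrite /vge v_sigz lexx orbT. Qed.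

Lemma sigzD (m n : int) : sigma ^ (m + n) = sigma ^ m * sigma ^ n.
Proof. exact: exprzDr sig_unit m n. Qed.

Lemma vge_conj (x : L) (a b : int) n : vge v x n -> vge v (sigma ^ a * x * sigma ^ b) (a + n + b).
Proof. move=> h; apply: vge_mul; [apply: vge_mul => //|]; exact: vge_sigz. Qed.


Variables (M : lmodType L) (T : M -> M).
Hypothesis HT : forall (a : L) (x y : M), T (a *: x + y) = a *: T x + T y.

Lemma T0 : T 0 = 0.
Proof.
have := HT 1 0 0; rewrite !scale1r addr0 => h2.
by move/(congr1 (fun z => z - T 0)): h2; rewrite subrr addrK => <-.
Qed.

Lemma TD x y : T (x + y) = T x + T y.
Proof. by have := HT 1 x y; rewrite !scale1r. Qed.

Lemma TZ a x : T (a *: x) = a *: T x.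
Proof. by have := HT a x 0; rewrite !addr0 T0 addr0. Qed.

Lemma TB x y : T (x - y) = T x - T y.
Proof. by rewrite -scaleN1r TD TZ scaleN1r. Qed.

Lemma iT0 n : iter n T 0 = 0.
Proof. by elim: n => //= n ->; rewrite T0. Qed.

Lemma iTD n x y : iter n T (x + y) = iter n T x + iter n T y.
Proof. by elim: n => //= n ->; rewrite TD. Qed.

Lemma iTZ n a x : iter n T (a *: x) = a *: iter n T x.
Proof. by elim: n => //= n ->; rewrite TZ. Qed.

Lemma iT_sum n (I : Type) (r : seq I) (P : pred I) (F : I -> M) :
  iter n T (\sum_(i <- r | P i) F i) = \sum_(i <- r | P i) iter n T (F i).
Proof.
elim/big_rec2: _ => [|i y1 y2 _ <-]; first exact: iT0.
by rewrite iTD.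
Qed.

Lemma T_sum (I : Type) (r : seq I) (P : pred I) (F : I -> M) :
  T (\sum_(i <- r | P i) F i) = \sum_(i <- r | P i) T (F i).
Proof. exact: (iT_sum 1). Qed.

Lemma ssp (p q : int) (x : M) : sigma ^ p *: (sigma ^ q *: x) = sigma ^ (p + q) *: x.
Proof. by rewrite scalerA sigzD. Qed.

Lemma sp0 (x : M) : sigma ^ 0 *: x = x.
Proof. by rewrite expr0z scale1r. Qed.

Lemma sconj (p : int) (a : L) (x : M) :
  sigma ^ p *: (a *: x) = (sigma ^ p * a * sigma ^ (- p)) *: (sigma ^ p *: x).
Proof.
rewrite !scalerA -!mulrA -sigzD // addNr expr0z mulr1 //.
Qed.

Lemma vge_conj0 (p : int) (a : L) : vge v a 0 -> vge v (sigma ^ p * a * sigma ^ (- p)) 0.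
Proof. move=> h; have := vge_conj a p (-p) 0 h; rewrite addr0 addrN //. Qed.

Definition Osp (g : seq M) (x : M) : Prop :=
  exists a : nat -> L, (forall j, vge v (a j) 0) /\ x = \sum_(j < size g) a j *: g`_j.

Lemma Osp_iff g x : in_Ospan v g x <-> Osp g x.
Proof.
split.
  case=> a [ha ->].
  exists (fun j => if insub j is Some i then a i else 0); split.
    by move=> j; case: insub => [i|] //; exact: vge0.
  by apply: eq_bigr => i _; rewrite valK.
case=> a [ha ->]; exists (fun i => a (val i)); split => //.
Qed.

Lemma Osp_gen g j : (j < size g)%N -> Osp g g`_j.
Proof.
move=> hj; exists (fun k => (k == j)%:R); split.
  by move=> k; case: (k == j); [rewrite /vge v1 // orbT | exact: vge0].
rewrite (bigD1 (Ordinal hj)) //= eqxx scale1r big1 ?addr0 // => i hi.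
have -> : (nat_of_ord i == j) = false.
  by apply/negbTE; apply: contra hi => /eqP hij; apply/eqP/val_inj.
by rewrite scale0r.
Qed.

Lemma Osp_0 g : Osp g 0.
Proof. exists (fun _ => 0); split; first by move=> _; exact: vge0.
by rewrite big1 // => i _; rewrite scale0r. Qed.

Lemma Osp_add g x y : Osp g x -> Osp g y -> Osp g (x + y).
Proof.
case=> a [ha ->] [b [hb ->]]; exists (fun j => a j + b j); split.
  by move=> j; apply: vge_add.
by rewrite -big_split; apply: eq_bigr => i _; rewrite scalerDl.
Qed.

Lemma Osp_scale g c x : vge v c 0 -> Osp g x -> Osp g (c *: x).
Proof.
move=> hc [a [ha ->]]; exists (fun j => c * a j); split.
  by move=> j; rewrite -(addr0 0); apply: vge_mul.
by rewrite scaler_sumr; apply: eq_bigr => i _; rewrite scalerA.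
Qed.

Lemma Osp_sum g (I : Type) (r : seq I) (P : pred I) (c : I -> L) (y : I -> M) :
  (forall i, P i -> vge v (c i) 0) -> (forall i, P i -> Osp g (y i)) ->
  Osp g (\sum_(i <- r | P i) c i *: y i).
Proof.
move=> hc hy; apply: (big_ind (Osp g)); [exact: Osp_0 | exact: Osp_add|].
by move=> i hi; apply: Osp_scale; [exact: hc | exact: hy].
Qed.

Lemma coord_unique n (b : 'I_n -> M) (hb : is_L_basis b) (a a' : 'I_n -> L) :
  \sum_i a i *: b i = \sum_i a' i *: b i -> forall i, a i = a' i.
Proof.
move=> h i; apply/eqP; rewrite -subr_eq0; apply/eqP.
apply: (hb.1 (fun i => a i - a' i)).
rewrite (eq_bigr (fun i => a i *: b i - a' i *: b i)); last by move=> j _; rewrite scalerBl.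
by rewrite sumrB h subrr.
Qed.

Lemma norm_le_sum2 (m n : nat) (F : 'I_m -> 'I_n -> int) j i :
  `|F j i| <= \sum_(j' < m) \sum_(i' < n) `|F j' i'|.
Proof.
apply: le_trans (_ : \sum_(i' < n) `|F j i'| <= _).
  by rewrite (bigD1 i) //= lerDl sumr_ge0.
rewrite (bigD1 j) //= lerDl sumr_ge0 // => k _; exact: sumr_ge0.
Qed.

Lemma vge_normb (x : L) (N : int) : `|v x| <= N -> vge v x (- N).
Proof. rewrite /vge => h; case: (x == 0) => //=; have := ler_norm (v x); have := ler_normr (v x) N; lia. Qed.

Lemma lat_Osp {Lam : M -> Prop} {g} : (forall x, Lam x <-> in_Ospan v g x) ->
  forall x, Lam x <-> Osp g x.
Proof. by move=> h x; rewrite h Osp_iff. Qed.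

Lemma decomp_in_basis g {n} {b : 'I_n -> M} (hb : is_L_basis b) :
  exists beta : 'I_(size g) -> 'I_n -> L, forall j : 'I_(size g), g`_j = \sum_i beta j i *: b i.
Proof.
have : forall j : 'I_(size g), exists beta : 'I_n -> L, g`_j = \sum_i beta i *: b i.
  by move=> j; exact: hb.2.
by case/fin_all_exists => beta h; exists beta.
Qed.

Lemma sum_in_basis g n (b : 'I_n -> M) (beta : 'I_(size g) -> 'I_n -> L)
  (hbeta : forall j : 'I_(size g), g`_j = \sum_i beta j i *: b i) (a : nat -> L) :
  \sum_(j < size g) a j *: g`_j = \sum_i (\sum_(j < size g) a j * beta j i) *: b i.
Proof.
rewrite (eq_bigr (fun j : 'I_(size g) => \sum_i (a j * beta j i) *: b i)); last first.
  by move=> j _; rewrite hbeta scaler_sumr; apply: eq_bigr => i _; rewrite scalerA.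
rewrite exchange_big /=; apply: eq_bigr => i _; by rewrite scaler_suml.
Qed.

Lemma lat_bound {Lam : M -> Prop} (hLam : is_O_lattice v Lam) {n} {b : 'I_n -> M}
  (hb : is_L_basis b) :
  exists N : int, forall x, Lam x -> forall alpha : 'I_n -> L,
    x = \sum_i alpha i *: b i -> forall i, vge v (alpha i) N.
Proof.
case: hLam => [[g hg] _].
have [beta hbeta] := decomp_in_basis g hb.
exists (- \sum_(j < size g) \sum_(i < n) `|v (beta j i)|).
move=> x /(lat_Osp hg) [a [ha hx]] alpha hxa i.
have := @coord_unique n b hb alpha (fun i => \sum_(j < size g) a j * beta j i).
rewrite -hxa hx (@sum_in_basis g n b beta hbeta); move/(_ erefl i) => ->.
apply: vge_sum => j _; rewrite -(add0r (- _)); apply: vge_mul => //.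
apply: vge_normb; exact: norm_le_sum2.
Qed.

Lemma sig_pow_nat (m : int) (k : nat) (x : M) :
  sigma ^ (m * k.+1%:Z) *: x = sigma ^ m *: (sigma ^ (m * k%:Z) *: x).
Proof. by rewrite ssp; congr (_ ^ _ *: _); rewrite -addn1 PoszD mulrDr mulr1 addrC. Qed.

Lemma lat_noexp (Lam : M -> Prop) (hLam : is_O_lattice v Lam) x (m : int) :
  Lam x -> x != 0 -> m < 0 -> ~ (forall y, Lam y -> Lam (sigma ^ m *: y)).
Proof.
move=> hx hx0 hm hst.
have hLam' := hLam; case: hLam' => [_ [n [b [hbL hb]]]].
have [N hN] := lat_bound hLam hb.
have [alpha hal] := hb.2 x.
have [i hi] : exists i, alpha i != 0.
  case: (pickP (fun i => alpha i != 0)) => [i hi|h0]; first by exists i.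
  move/negP: hx0; case; rewrite hal big1 // => i _.
  by have := h0 i; move/negbFE/eqP => ->; rewrite scale0r.
have hk : forall k : nat, Lam (sigma ^ (m * k%:Z) *: x).
  elim=> [|k IH]; first by rewrite mulr0 sp0.
  by rewrite sig_pow_nat; apply: hst.
set k := `|N - v (alpha i)|%N.+1.
have := hN _ (hk k) (fun j => sigma ^ (m * k%:Z) * alpha j).
rewrite hal scaler_sumr; under eq_bigr do rewrite scalerA.
move/(_ erefl i); rewrite /vge (negPf (mul_nz (sigz_nz _) hi)) /= Hv.1 ?sigz_nz // v_sigz.
have : (N - v (alpha i)) <= `|N - v (alpha i)|%N by rewrite abszE ler_norm.
rewrite /k; nia.
Qed.

Lemma lat_compare (Lam1 Lam2 : M -> Prop) :
  is_O_lattice v Lam1 -> is_O_lattice v Lam2 ->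
  exists a : int, 0 <= a /\ forall x, Lam1 x -> Lam2 (sigma ^ a *: x).
Proof.
case=> [[g1 hg1] _] [[g2 hg2] [n [b [hb2 hb]]]].
have [beta hbeta] := decomp_in_basis g1 hb.
set a := \sum_(j < size g1) \sum_(i < n) `|v (beta j i)|.
exists a; split; first by apply: sumr_ge0 => j _; apply: sumr_ge0.
have key : forall j : 'I_(size g1), Osp g2 (sigma ^ a *: g1`_j).
  move=> j; rewrite hbeta scaler_sumr.
  under eq_bigr do rewrite scalerA.
  apply: Osp_sum => i _; last by apply/(lat_Osp hg2).
  rewrite -(subrr a); apply: vge_mul; first exact: vge_sigz.
  apply: vge_normb; exact: norm_le_sum2.
move=> x /(lat_Osp hg1) [c [hc ->]]; apply/(lat_Osp hg2).
rewrite scaler_sumr; under eq_bigr do rewrite sconj.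
apply: Osp_sum => j _; [exact: vge_conj0 | exact: key].
Qed.

Lemma lat_G (La Lb : M -> Prop) (a1 a2 pA pB : int) (n : nat) :
  (forall x, Lb x -> La (sigma ^ a1 *: x)) ->
  (forall x, La x -> Lb (sigma ^ a2 *: x)) ->
  (forall z, La z -> exists y, La y /\ z = sigma ^ pA *: iter n T y) ->
  (forall y, Lb y -> Lb (sigma ^ pB *: iter n T y)) ->
  forall x, Lb x -> Lb (sigma ^ (a1 + a2 + pB - pA) *: x).
Proof.
move=> hba hab hsurj hinto x hx.
have [y [hy hyx]] := hsurj _ (hba _ hx).
have h := hinto _ (hab _ hy).
suff -> : sigma ^ (a1 + a2 + pB - pA) *: x = sigma ^ pB *: iter n T (sigma ^ a2 *: y) by [].
rewrite iTZ ssp.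
have -> : sigma ^ (pB + a2) *: iter n T y = sigma ^ (pB + a2 - pA) *: (sigma ^ pA *: iter n T y).
  by rewrite ssp; congr (_ ^ _ *: _); ring.
rewrite -hyx ssp; congr (_ ^ _ *: _); ring.
Qed.

Lemma iter_into (La : M -> Prop) (p : int) (n : nat) :
  (forall y, La y -> La (sigma ^ p *: iter n T y)) ->
  forall k : nat, forall y, La y -> La (sigma ^ (k%:Z * p) *: iter (k * n) T y).
Proof.
move=> h; elim=> [|k IH] y hy; first by rewrite mul0r sp0.
have := h _ (IH _ hy); rewrite iTZ ssp -iterD.
have -> : (n + k * n)%N = (k.+1 * n)%N by rewrite mulSn.
by have -> : p + k%:Z * p = k.+1%:Z * p by rewrite -addn1 PoszD mulrDl mul1r addrC.
Qed.

Lemma iter_surj (La : M -> Prop) (p : int) (n : nat) :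
  (forall z, La z -> exists y, La y /\ z = sigma ^ p *: iter n T y) ->
  forall k : nat, forall z, La z -> exists y, La y /\ z = sigma ^ (k%:Z * p) *: iter (k * n) T y.
Proof.
move=> h; elim=> [|k IH] z hz; first by exists z; rewrite mul0r sp0.
have [y1 [hy1 ->]] := h _ hz.
have [y2 [hy2 ->]] := IH _ hy1.
exists y2; split => //; rewrite iTZ ssp -iterD.
have -> : (n + k * n)%N = (k.+1 * n)%N by rewrite mulSn.
by have -> : p + k%:Z * p = k.+1%:Z * p by rewrite -addn1 PoszD mulrDl mul1r addrC.
Qed.



Variables (f : {poly L}) (d : nat).
Hypothesis Hd : (1 <= d)%N.
Hypothesis Hmonic : f \is monic.
Hypothesis Hsize : size f = d.+1.
Hypothesis Hc0 : f`_0 != 0.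
Variable m0 : M.
Hypothesis Hsp : forall x : M, exists p : {poly L}, x = poly_act T p m0.
Hypothesis Hker : forall p : {poly L}, poly_act T p m0 = 0 <-> exists q : {poly L}, p = q * f.

Lemma poly_act_widen (p : {poly L}) n x : (size p <= n)%N ->
  poly_act T p x = \sum_(i < n) p`_i *: iter i T x.
Proof.
move=> h; rewrite /poly_act (big_ord_widen n (fun i => p`_i *: iter i T x) h) big_mkcond /=.
apply: eq_bigr => i _; case: ifP => // /negbT; rewrite -leqNgt => hi.
by rewrite nth_default // scale0r.
Qed.

Lemma rel0 : \sum_(i < d.+1) f`_i *: iter i T m0 = 0.
Proof.
have := (Hker f).2 (ex_intro _ 1 (esym (mul1r f))).
by rewrite (@poly_act_widen f d.+1) ?Hsize.
Qed.

Lemma fd1 : f`_d = 1.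
Proof. by have := monicP Hmonic; rewrite /lead_coef Hsize. Qed.

Lemma c0_unit : f`_0 \is a GRing.unit.
Proof. exact: HL. Qed.

Definition y0 : M := - \sum_(i < d) ((f`_0)^-1 * f`_i.+1) *: iter i T m0.

Lemma Ty0 : T y0 = m0.
Proof.
have h := rel0; rewrite big_ord_recl /= in h.
have h2 : \sum_(i < d) f`_i.+1 *: iter i.+1 T m0 = - (f`_0 *: m0).
  by apply/eqP; rewrite -addr_eq0 addrC h.
rewrite /y0 -scaleN1r TZ T_sum.
rewrite (eq_bigr (fun i : 'I_d => (f`_0)^-1 *: (f`_i.+1 *: iter i.+1 T m0))); last first.
  by move=> i _; rewrite TZ scalerA.
by rewrite -scaler_sumr h2 scalerN scaleN1r opprK scalerA mulVr ?c0_unit // scale1r.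
Qed.

Lemma Tsurj x : exists y, T y = x.
Proof.
have [p ->] := Hsp x.
exists (\sum_(i < size p) p`_i *: (if (i : nat) is j.+1 then iter j T m0 else y0)).
rewrite T_sum /poly_act; apply: eq_bigr => i _; rewrite TZ; congr (_ *: _).
by case: (nat_of_ord i) => [|j] //=; rewrite Ty0.
Qed.

Lemma actX (p : {poly L}) : poly_act T ('X * p) m0 = T (poly_act T p m0).
Proof.
have hs : (size ('X * p)%R <= (size p).+1)%N.
  rewrite -commr_polyX; have [->|hp] := eqVneq p 0; first by rewrite mul0r size_poly0.
  by rewrite size_mulX.
rewrite (@poly_act_widen _ _ m0 hs) big_ord_recl coefXM eqxx scale0r add0r.
rewrite /poly_act T_sum; apply: eq_bigr => i _; by rewrite coefXM /= TZ.
Qed.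

Lemma Tinj0 y : T y = 0 -> y = 0.
Proof.
have [p ->] := Hsp y; rewrite -actX => /Hker [h hh].
have h0 : h`_0 = 0.
  have := congr1 (fun q : {poly L} => q`_0) hh.
  rewrite coefXM eqxx coefM big_ord1 /= subn0 => /esym h0'.
  by rewrite -(mulrK c0_unit h`_0) h0' mul0r.
set h' := \poly_(i < size h) h`_i.+1.
have hX : h = 'X * h'.
  apply/polyP => j; rewrite coefXM; case: j => [|j] //=.
  rewrite coef_poly; case: ifP => // /negbT; rewrite -leqNgt => hj.
  by rewrite nth_default // (leq_trans hj).
apply/Hker; exists h'; apply/polyP => i.
have := congr1 (fun q : {poly L} => q`_i.+1) hh.
by rewrite hX -mulrA !coefXM.
Qed.

Lemma Tinj x y : T x = T y -> x = y.
Proof. move=> h; apply/eqP; rewrite -subr_eq0; apply/eqP/Tinj0; by rewrite TB h subrr. Qed.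

Lemma TsurjB x : exists y, T y == x.
Proof. by have [y hy] := Tsurj x; exists y; apply/eqP. Qed.

Definition Tinv (x : M) : M := xchoose (TsurjB x).

Lemma TK x : T (Tinv x) = x.
Proof. exact: (eqP (xchooseP (TsurjB x))). Qed.


Definition W (k : int) : M :=
  match k with Posz n => iter n T m0 | Negz n => iter n.+1 Tinv m0 end.

Lemma TW k : T (W k) = W (k + 1).
Proof.
case: k => [n|[|n]].
- by have -> : Posz n + 1 = Posz n.+1 by rewrite -addn1 PoszD.
- by rewrite /= TK.
- have -> : Negz n.+1 + 1 = Negz n by rewrite !NegzE; lia.
  by rewrite /= TK.
Qed.

Lemma iterW (n : nat) k : iter n T (W k) = W (k + n%:Z).
Proof.
elim: n => [|n IH]; first by rewrite addr0.
by rewrite iterS IH TW -addrA -[n.+1]addn1 PoszD.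
Qed.

Definition relsum (k : int) : M := \sum_(i < d.+1) f`_i *: W (k + i%:Z).

Lemma relsum_pos (n : nat) : relsum n = 0.
Proof.
rewrite /relsum (eq_bigr (fun i : 'I_d.+1 => iter n T (f`_i *: iter i T m0))).
  by rewrite -iT_sum rel0 iT0.
by move=> i _; rewrite iTZ; congr (_ *: _); rewrite addrC -iterW.
Qed.

Lemma T_relsum k : T (relsum k) = relsum (k + 1).
Proof.
rewrite /relsum T_sum; apply: eq_bigr => i _; rewrite TZ TW; congr (_ *: W _).
by rewrite addrAC.
Qed.

Lemma relsum_neg (n : nat) : relsum (- n%:Z) = 0.
Proof.
elim: n => [|n IH]; first exact: (relsum_pos 0).
apply: Tinj0; rewrite T_relsum.
by have -> : - (n.+1)%:Z + 1 = - n%:Z by rewrite -addn1 PoszD; ring.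
Qed.

Lemma relW k : relsum k = 0.
Proof.
case: k => n; first exact: relsum_pos.
by rewrite NegzE relsum_neg.
Qed.

Variables (s : rat) (r : int).
Hypothesis Hs : s = ((0 - v f`_0)%:~R / d%:R).
Hypothesis HNP : forall i : nat, (i <= d)%N -> f`_i != 0 ->
           (v f`_0)%:~R + s * i%:R <= (v f`_i)%:~R.
Hypothesis Hr : r%:~R = d%:R * s.

Lemma hd0 : (d%:R : rat) != 0.
Proof. by rewrite pnatr_eq0 -lt0n. Qed.

Lemma hr0 : v f`_0 = - r.
Proof.
have : (r%:~R : rat) = (0 - v f`_0)%:~R by rewrite Hr Hs mulrC divfK // hd0.
by move/eqP; rewrite eqr_int => /eqP ->; rewrite sub0r opprK.
Qed.

Lemma hNPi i : (i <= d)%N -> f`_i != 0 -> r * (i%:Z - d%:Z) <= d%:Z * v f`_i.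
Proof.
move=> hi hci; have := HNP i hi hci; rewrite hr0 => h.
rewrite -(ler_int rat) !intrM intrB /=.
have hD : (0 : rat) < d%:R by rewrite ltr0n.
have hDS : (d%:R : rat) * s = r%:~R by rewrite Hr.
move: h hD hDS; rewrite intrN.
have -> : ((i%:Z)%:~R : rat) = i%:R by [].
have -> : ((d%:Z)%:~R : rat) = d%:R by [].
move=> *; nra.
Qed.

Definition e (k : int) : int := ((k * r) %/ d)%Z.

Lemma key k j (vc : int) : r * (j - k) <= d%:Z * vc -> 0 <= e k - e j + vc.
Proof.
move=> h; rewrite /e.
have := divz_eq (k*r) d; have := divz_eq (j*r) d.
have hd0 : (d%:Z != 0) by lia.
have := modz_ge0 (k*r) hd0; have := modz_ge0 (j*r) hd0.
have := ltz_mod (k*r) hd0; have := ltz_mod (j*r) hd0.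
rewrite /absz /=.
set a := ((k*r) %/ d)%Z; set b := ((j*r) %/ d)%Z; set c := ((k*r) %% d)%Z; set e := ((j*r) %% d)%Z.
nia.
Qed.

Lemma e_add_d k : e (k + d%:Z) = e k + r.
Proof.
rewrite /e mulrDl addrC [d%:Z * r]mulrC divzMDl; first by rewrite addrC.
by have := Hd; rewrite -lt0n => ?; lia.
Qed.

Lemma e_mono k : 0 <= r -> e (k - 1) <= e k.
Proof. move=> hr; apply: lez_pdiv2r => //; nia. Qed.

Lemma gen_into g p n :
  (forall j, (j < size g)%N -> Osp g (sigma ^ p *: iter n T g`_j)) ->
  forall x, Osp g x -> Osp g (sigma ^ p *: iter n T x).
Proof.
move=> hj x [a [ha ->]].
rewrite iT_sum scaler_sumr; under eq_bigr do rewrite iTZ sconj.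
apply: Osp_sum => j _; [exact: vge_conj0 | exact: hj].
Qed.

Lemma gen_surj g p n :
  (forall j, (j < size g)%N -> exists y, Osp g y /\ g`_j = sigma ^ p *: iter n T y) ->
  forall z, Osp g z -> exists y, Osp g y /\ z = sigma ^ p *: iter n T y.
Proof.
move=> hj z [a [ha ->]].
have : forall j : 'I_(size g), exists y, Osp g y /\ g`_j = sigma ^ p *: iter n T y.
  by move=> j; exact: hj.
case/fin_all_exists => Y hY.
exists (\sum_(j < size g) (sigma ^ (- p) * a j * sigma ^ p) *: Y j); split.
  apply: Osp_sum => j _; last by case: (hY j).
  by have := vge_conj0 (- p) _ (ha j); rewrite opprK.
rewrite iT_sum scaler_sumr; apply: eq_bigr => j _.
rewrite iTZ scalerA !mulrA -sigzD addrN expr0z mul1r.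
by rewrite -scalerA -(proj2 (hY j)).
Qed.

Lemma coefO (a b : int) x : (x != 0 -> 0 <= a + v x + b) -> vge v (sigma ^ a * x * sigma ^ b) 0.
Proof.
have [->|hx] := eqVneq x 0; first by rewrite mulr0 mul0r => _; exact: vge0.
move=> /(_ isT) h; apply: (@vge_le _ (a + v x + b) 0 _ h).
by apply: vge_conj; rewrite /vge lexx orbT.
Qed.

Definition g : seq M := [seq sigma ^ e i%:Z *: W i%:Z | i <- iota 0 d].

Lemma size_g : size g = d.
Proof. by rewrite size_map size_iota. Qed.

Lemma nth_g j : (j < d)%N -> g`_j = sigma ^ e j%:Z *: W j%:Z.
Proof. by move=> hj; rewrite (nth_map 0%N) ?size_iota // nth_iota. Qed.

Lemma combo m (k : int) (c : 'I_m -> L) (j : 'I_m -> int) :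
  W k = \sum_i c i *: W (j i) ->
  (forall i, vge v (sigma ^ e k * c i * sigma ^ (- e (j i))) 0) ->
  (forall i, Osp g (sigma ^ e (j i) *: W (j i))) ->
  Osp g (sigma ^ e k *: W k).
Proof.
move=> -> hc hO; rewrite scaler_sumr.
have -> : \sum_i sigma ^ e k *: (c i *: W (j i)) =
   \sum_i (sigma ^ e k * c i * sigma ^ (- e (j i))) *: (sigma ^ e (j i) *: W (j i)).
  apply: eq_bigr => i _; rewrite !scalerA -!mulrA -sigzD addNr expr0z mulr1 //.
exact: Osp_sum.
Qed.

Lemma Q_pos (n : nat) : Osp g (sigma ^ e n%:Z *: W n%:Z).
Proof.
elim/ltn_ind: n => n IH.
case: (ltnP n d) => hn.
  by rewrite -nth_g //; apply: Osp_gen; rewrite size_g.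
have hr := relW (n%:Z - d%:Z); rewrite /relsum big_ord_recr /= fd1 scale1r in hr.
have hnd : n%:Z - d%:Z + d%:Z = n%:Z by ring.
rewrite hnd in hr.
apply: (@combo d n (fun i => - f`_i) (fun i => n%:Z - d%:Z + (i : nat)%:Z)).
- move/eqP: hr; rewrite addrC addr_eq0 => /eqP ->.
  by rewrite -sumrN; apply: eq_bigr => i _; rewrite scaleNr.
- move=> i; rewrite mulrN mulNr; apply: vge_opp; apply: coefO => hf.
  have := key n (n%:Z - d%:Z + i%:Z) (v f`_i).
  have := hNPi i (ltnW (ltn_ord i)) hf.
  move=> h1 h2; have : r * (n%:Z - d%:Z + i%:Z - n%:Z) <= d%:Z * v f`_i.
    by have -> : n%:Z - d%:Z + i%:Z - n%:Z = i%:Z - d%:Z by ring.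
  move/h2; lia.
- move=> i; have -> : n%:Z - d%:Z + i%:Z = (n - d + i)%N%:Z.
    by rewrite PoszD subzn.
  apply: IH; have := ltn_ord i; lia.
Qed.

Lemma Q_neg (n : nat) : Osp g (sigma ^ e (- n%:Z) *: W (- n%:Z)).
Proof.
elim/ltn_ind: n => n IH.
case: n IH => [|m] IH; first by rewrite oppr0; exact: (Q_pos 0).
set k := - (m.+1)%:Z.
have hr : f`_0 *: W k + \sum_(i < d) f`_(i : nat).+1 *: W (k + (i : nat).+1%:Z) = 0.
  by have := relW k; rewrite /relsum big_ord_recl addr0.
have hc0u := c0_unit.
apply: (@combo d k (fun i => - ((f`_0)^-1 * f`_(i : nat).+1)) (fun i => k + (i : nat).+1%:Z)).
- have h1 : f`_0 *: W k = - \sum_(i < d) f`_(i : nat).+1 *: W (k + (i : nat).+1%:Z).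
    by apply/eqP; rewrite -addr_eq0 hr.
  rewrite -[W k](scale1r) -(mulVr hc0u) -scalerA h1 scalerN scaler_sumr -sumrN.
  by apply: eq_bigr => i _; rewrite scalerA scaleNr.
- move=> i; rewrite mulrN mulNr; apply: vge_opp; apply: coefO => hf.
  have hfi : f`_(i : nat).+1 != 0 by apply: contraNneq hf => ->; rewrite mulr0.
  have hci : (f`_0)^-1 != 0 by rewrite invr_eq0.
  rewrite Hv.1 // vinv // hr0 opprK.
  have := key k (k + (i : nat).+1%:Z) (r + v f`_(i : nat).+1).
  have := hNPi (i : nat).+1 (ltn_ord i) hfi.
  move=> h1 h2; have : r * (k + (i : nat).+1%:Z - k) <= d%:Z * (r + v f`_(i : nat).+1).
    have -> : k + (i : nat).+1%:Z - k = (i : nat).+1%:Z by ring.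
    move: h1; rewrite -[(i : nat).+1]addn1 PoszD; nia.
  move/h2; lia.
- move=> i; rewrite /k.
  case: (leqP m.+1 (i : nat).+1) => hi.
    have -> : - (m.+1)%:Z + (i : nat).+1%:Z = ((i : nat).+1 - m.+1)%N%:Z by lia.
    exact: Q_pos.
  have -> : - (m.+1)%:Z + (i : nat).+1%:Z = - (m.+1 - (i : nat).+1)%N%:Z.
    by lia.
  apply: IH; lia.
Qed.

Lemma Q (k : int) : Osp g (sigma ^ e k *: W k).
Proof. case: k => n; first exact: Q_pos. by rewrite NegzE; exact: Q_neg. Qed.

Lemma phi_into x : Osp g x -> Osp g (sigma ^ r *: iter d T x).
Proof.
apply: gen_into => j; rewrite size_g => hj.
rewrite nth_g // iTZ ssp iterW.
have -> : r + e j%:Z = e (j%:Z + d%:Z) by rewrite e_add_d addrC.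
exact: Q.
Qed.

Lemma phi_surj z : Osp g z -> exists y, Osp g y /\ z = sigma ^ r *: iter d T y.
Proof.
apply: gen_surj => j; rewrite size_g => hj.
exists (sigma ^ e (j%:Z - d%:Z) *: W (j%:Z - d%:Z)); split; first exact: Q.
rewrite nth_g // iTZ ssp iterW.
have -> : j%:Z - d%:Z + d%:Z = j%:Z by ring.
by rewrite addrC -e_add_d; have -> : j%:Z - d%:Z + d%:Z = j%:Z by ring.
Qed.

Definition bas (i : 'I_d) : M := sigma ^ e i%:Z *: W i%:Z.

Lemma sigz_unit (n : int) : sigma ^ n \is a GRing.unit.
Proof. exact: HL _ (sigz_nz n). Qed.

Lemma indep (a : 'I_d -> L) : \sum_i a i *: bas i = 0 -> forall i, a i = 0.
Proof.
move=> h.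
pose i0 := Ordinal Hd.
pose F := fun j : nat => a (insubd i0 j) * sigma ^ e j%:Z.
pose p := \poly_(j < d) F j.
have hins : forall i : 'I_d, insubd i0 i = i.
  by move=> i; apply: val_inj; rewrite val_insubd ltn_ord.
have hp0 : poly_act T p m0 = 0.
  rewrite (@poly_act_widen p d m0 (size_poly _ _)) -[RHS]h.
  by apply: eq_bigr => i _; rewrite coef_poly ltn_ord /F -scalerA hins.
have [q hq] := (Hker p).1 hp0.
have q0 : q = 0.
  apply/eqP/negPn/negP => hq0.
  have := size_Mmonic hq0 Hmonic; rewrite -hq Hsize.
  have := size_poly d F; have := size_poly_gt0 q; rewrite hq0 => hq1.
  rewrite -/p; lia.
move=> i; have := congr1 (fun p : {poly L} => p`_i) hq.
rewrite q0 mul0r coef0 coef_poly ltn_ord /F hins => h'.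
by rewrite -(mulrK (sigz_unit (e i)) (a i)) h' mul0r.
Qed.

Lemma sum_g (F : nat -> L) :
  \sum_(l < size g) F l *: g`_l = \sum_(i < d) F i *: bas i.
Proof.
rewrite -(big_mkord xpredT (fun l => F l *: g`_l)) size_g big_mkord.
by apply: eq_bigr => i _; rewrite nth_g.
Qed.

Lemma span_W (j : nat) : exists c : 'I_d -> L, W j = \sum_i c i *: bas i.
Proof.
have [a [_ ha]] := Q j.
exists (fun i => sigma ^ (- e j) * a i).
have -> : W j = sigma ^ (- e j) *: (sigma ^ e j *: W j) by rewrite ssp addNr sp0.
rewrite ha scaler_sumr.
rewrite (eq_bigr (fun l : 'I_(size g) => (sigma ^ (- e j) * a l) *: g`_l)); last first.
  by move=> l _; rewrite scalerA.
exact: (sum_g (fun l => sigma ^ (- e j) * a l)).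
Qed.

Lemma spanning x : exists c : 'I_d -> L, x = \sum_i c i *: bas i.
Proof.
have [p ->] := Hsp x.
have : forall j : 'I_(size p), exists c : 'I_d -> L, W j = \sum_i c i *: bas i.
  by move=> j; exact: span_W.
case/fin_all_exists => C hC.
exists (fun i => \sum_(j < size p) p`_j * C j i).
rewrite /poly_act.
rewrite (eq_bigr (fun j : 'I_(size p) => \sum_i (p`_j * C j i) *: bas i)); last first.
  move=> j _; have -> : iter j T m0 = W j by [].
  by rewrite hC scaler_sumr; apply: eq_bigr => i _; rewrite scalerA.
rewrite exchange_big /=; apply: eq_bigr => i _; by rewrite scaler_suml.
Qed.

Lemma Lam_lat : is_O_lattice v (in_Ospan v g).
Proof.
split; first by exists g.
exists d, bas; split; first by move=> i; apply/Osp_iff; exact: Q.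
split; [exact: indep | exact: spanning].
Qed.

Lemma bas_nz (i : 'I_d) : bas i != 0.
Proof.
apply/negP => /eqP h0.
have := @indep (fun j => (j == i)%:R).
rewrite (bigD1 i) //= eqxx scale1r h0 add0r big1 => [/(_ erefl i)|j hj].
  by rewrite eqxx => /eqP; rewrite oner_eq0.
by rewrite (negPf hj) scale0r.
Qed.

Lemma rpos : 0 < s -> 0 < r.
Proof.
move=> hs; rewrite -(ltr0z rat) Hr; apply: mulr_gt0 => //; by rewrite ltr0n.
Qed.

Lemma part1 : exists Lam : M -> Prop,
      is_O_lattice v Lam /\
      set_eq (img_st T sigma r (Posz d) Lam) Lam /\
      (0 < s -> set_sub (img_st T sigma 0 (-1) Lam) Lam).
Proof.
exists (in_Ospan v g); split; first exact: Lam_lat.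
split.
  move=> z; split.
    case=> x [y [hx [hty ->]]]; rewrite /tpow /= in hty; rewrite hty.
    by apply/Osp_iff; apply: phi_into; apply/Osp_iff.
  move/Osp_iff/phi_surj => [y [hy ->]].
  by exists y, (iter d T y); split; [apply/Osp_iff | split].
move=> hs z [x [y [hx [hty ->]]]]; rewrite /tpow /= in hty; rewrite sp0.
move/Osp_iff: hx => [a [ha hxa]].
pose y' := \sum_(l < size g) a l *: (sigma ^ e (l : nat)%:Z *: W ((l : nat)%:Z - 1)).
have -> : y = y'.
  apply: Tinj; rewrite hty hxa /y' T_sum; apply: eq_bigr => l _.
  rewrite TZ TZ TW nth_g; last by rewrite -size_g.
  by rewrite subrK.
apply/Osp_iff; apply: Osp_sum => l _ //.
have -> : sigma ^ e (l : nat)%:Z *: W ((l : nat)%:Z - 1) =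
  sigma ^ (e (l : nat)%:Z - e ((l : nat)%:Z - 1)) *: (sigma ^ e ((l : nat)%:Z - 1) *: W ((l : nat)%:Z - 1)).
  by rewrite ssp subrK.
apply: Osp_scale; last exact: Q.
apply: (@vge_le _ (e (l : nat)%:Z - e ((l : nat)%:Z - 1))); first exact: vge_sigz.
by rewrite subr_ge0 e_mono // ltW // rpos.
Qed.

Lemma sz_nz (a : int) (x : M) : x != 0 -> sigma ^ a *: x != 0.
Proof.
move=> hx; apply/negP => /eqP h; move/negP: hx; apply.
by rewrite -[x]sp0 -(addNr a) -ssp h scaler0.
Qed.

Lemma core (n : nat) (w' : int) (Lam' : M -> Prop) : (0 < n)%N -> is_O_lattice v Lam' ->
  (forall y, Lam' y -> Lam' (sigma ^ w' *: iter n T y)) ->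
  (forall z, Lam' z -> exists y, Lam' y /\ z = sigma ^ w' *: iter n T y) ->
  w' * d%:Z = n%:Z * r.
Proof.
move=> hn hL' hinto hsurj.
pose Lam := in_Ospan v g.
have hLam := Lam_lat.
have intoL : forall y, Lam y -> Lam (sigma ^ r *: iter d T y).
  by move=> y /Osp_iff/phi_into/Osp_iff.
have surjL : forall z, Lam z -> exists y, Lam y /\ z = sigma ^ r *: iter d T y.
  by move=> z /Osp_iff/phi_surj [y [hy ->]]; exists y; split => //; apply/Osp_iff.
have [a1 [ha1 h1]] := lat_compare _ _ hLam hL'.
have [a2 [ha2 h2]] := lat_compare _ _ hL' hLam.
pose i0 := Ordinal Hd.
have hb0 : Lam (bas i0) by apply/Osp_iff; exact: Q.
have hb0nz := bas_nz i0.
set K := (absz (a1 + a2)).+1.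
have hK : a1 + a2 < K%:Z by rewrite /K; lia.
case: (ltgtP (w' * d%:Z - n%:Z * r) 0) => hdel; last by lia.
-
  have hs := iter_surj _ _ _ surjL (K * n).
  have hi := iter_into _ _ _ hinto (K * d).
  have e1 : (K * d * n = K * n * d)%N by rewrite mulnAC.
  rewrite e1 in hi.
  have H := lat_G _ _ _ _ _ _ _ h2 h1 hs hi.
  exfalso; apply: (lat_noexp _ hL' _ _ (h1 _ hb0) (sz_nz a1 _ hb0nz) _ H).
  rewrite !PoszM; nia.
-
  have hs := iter_surj _ _ _ hsurj (K * d).
  have hi := iter_into _ _ _ intoL (K * n).
  have e1 : (K * n * d = K * d * n)%N by rewrite mulnAC.
  rewrite e1 in hi.
  have H := lat_G _ _ _ _ _ _ _ h1 h2 hs hi.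
  exfalso; apply: (lat_noexp _ hLam _ _ hb0 hb0nz _ H).
  rewrite !PoszM; nia.
Qed.

Lemma iterTK k x : iter k T (iter k Tinv x) = x.
Proof. elim: k x => [|k IH] x //; by rewrite iterSr iterS TK IH. Qed.

Lemma part2 (u w : int) (Lam' : M -> Prop) : u != 0 ->
      is_O_lattice v Lam' ->
      set_eq (img_st T sigma w u Lam') Lam' ->
      (w%:~R / u%:~R : rat) = s.
Proof.
move=> hu hL' hset.
suff hwd : w * d%:Z = u * r.
  have hs : s = r%:~R / d%:R by rewrite Hr [_ * s]mulrC mulfK // hd0.
  rewrite hs; apply/eqP; rewrite eqr_div ?intr_eq0 ?hd0 //.
  by rewrite pmulrn -!intrM hwd mulrC.
case: u hu hset => [n|n] hu hset.
- apply: (@core n w Lam') => //.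
  + by rewrite lt0n; apply: contraNneq hu => ->.
  + move=> y hy; apply/hset; exists y, (iter n T y); split => //.
  + move=> z /hset [x [y [hx [hty ->]]]]; exists x; split => //.
    by rewrite /tpow /= in hty; rewrite hty.
- have := @core n.+1 (- w) Lam' isT hL'.
  have hi : forall y, Lam' y -> Lam' (sigma ^ (- w) *: iter n.+1 T y).
    move=> z /hset [x [y [hx [hty ->]]]]; rewrite /tpow /= in hty.
    by rewrite iTZ ssp addNr sp0 /= hty.
  have hs : forall z, Lam' z -> exists y, Lam' y /\ z = sigma ^ (- w) *: iter n.+1 T y.
    move=> x hx; exists (sigma ^ w *: iter n.+1 Tinv x); split.
      by apply/hset; exists x, (iter n.+1 Tinv x); split => //; split => //; exact: (iterTK n.+1 x).
    by rewrite iTZ ssp addNr sp0 iterTK.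
  move/(_ hi hs); rewrite NegzE; lia.
Qed.

End Val.

Theorem theorem3p7
  (L : unitRingType) (v : L -> int) (sigma : L)
  (HL : is_skew_field L) (Hv : is_discrete_valuation v) (Hc : v_complete v)
  (Hsigma0 : sigma != 0) (Hsigma : v sigma = 1)
  (f : {poly L}) (d : nat) (Hd : (1 <= d)%N)
  (Hmonic : f \is monic) (Hsize : size f = d.+1) (Hc0 : f`_0 != 0)
  (s : rat) (Hs : s = ((0 - v f`_0)%:~R / d%:R))
  (HNP : forall i : nat, (i <= d)%N -> f`_i != 0 ->
           (v f`_0)%:~R + s * i%:R <= (v f`_i)%:~R)
  (r : int) (Hr : r%:~R = d%:R * s)
  (M : lmodType L) (T : M -> M)
  (HT : forall (a : L) (x y : M), T (a *: x + y) = a *: T x + T y)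
  (HM : iso_cyclic T f) :
  (exists Lam : M -> Prop,
      is_O_lattice v Lam /\
      set_eq (img_st T sigma r (Posz d) Lam) Lam /\
      (0 < s -> set_sub (img_st T sigma 0 (-1) Lam) Lam)) /\
  (forall (u w : int) (Lam' : M -> Prop), u != 0 ->
      is_O_lattice v Lam' ->
      set_eq (img_st T sigma w u Lam') Lam' ->
      (w%:~R / u%:~R : rat) = s).
Proof.
case: HM => m0 [Hsp Hker].
split.
  exact: (@part1 L v sigma HL Hv Hsigma0 Hsigma M T HT f d Hd Hmonic Hsize Hc0 m0 Hsp Hker s r Hs HNP Hr).
move=> u w Lam' hu hL' hset.
exact: (@part2 L v sigma HL Hv Hsigma0 Hsigma M T HT f d Hd Hmonic Hsize Hc0 m0 Hsp Hker s r Hs HNP Hr u w Lam' hu hL' hset).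
Qed.
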